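(* Let $n\ge1$. (a) If $\alpha$ is an honourable subset of $\coprod_{k=0}^n\mathrm{Sur}([n],[k])$, then $\sum_{k=0}^n k|\alpha_k|\ge n$. (b) Conversely, let $(a_0,\dots,a_n)\in\mathbb{N}_0^{n+1}$ with $a_k\le\binom nk$ for all $k$. If $\sum_{k=0}^n k a_k\ge n$, then there is an honourable subset $\alpha$ of $\coprod_{k=0}^n\mathrm{Sur}([n],[k])$ with $|\alpha_k|=a_k$ for every $k\in\{0,\dots,n\}$.
   Context: $[n]=\{0<\dots<n\}$; $\mathrm{Sur}([n],[k])$ is the set of surjective order-preserving maps $[n]\to[k]$. For $\mu\in\mathrm{Sur}([n],[k])$ let $\mu^\triangle:=\{\max\mu^{-1}(0),\dots,\max\mu^{-1}(k-1)\}\subseteq\{0,\dots,n-1\}$ (a set of cardinality $k$; $\mu\mapsto\mu^\triangle$ is a bijection from $\coprod_{k}\mathrm{Sur}([n],[k])$ onto the power set of $\{0,\dots,n-1\}$). A subset $\alpha\subseteq\coprod_{k=0}^n\mathrm{Sur}([n],[k])$ is honourable if $\bigcup_{\mu\in\alpha}\mu^\triangle=\{0,1,\dots,n-1\}$; $\alpha_k:=\alpha\cap\mathrm{Sur}([n],[k])$. *)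

(* Defs.v *)
From mathcomp Require Import all_boot.
Set Implicit Arguments. Unset Strict Implicit. Unset Printing Implicit Defensive.

(* [n] = {0,...,n} is encoded as 'I_n.+1.
   Sur n k = set of surjective order-preserving maps [n] -> [k]. *)
Definition Sur (n k : nat) : {set {ffun 'I_n.+1 -> 'I_k.+1}} :=
  [set f : {ffun 'I_n.+1 -> 'I_k.+1} | [forall i : 'I_n.+1, forall j : 'I_n.+1, (i <= j) ==> (f i <= f j)]
           && [forall y : 'I_k.+1, exists x : 'I_n.+1, f x == y]].

Definition tri (n k : nat) (mu : {ffun 'I_n.+1 -> 'I_k.+1}) : {set 'I_n.+1} :=
  [set i : 'I_n.+1 | [exists j : 'I_k.+1,
     [&& (j < k)%N, mu i == j &
         [forall i' : 'I_n.+1, (mu i' == j) ==> (i' <= i)]]]].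

(* A subset alpha of the disjoint union coprod_{k=0}^n Sur([n],[k]) is
   encoded as the family of its components alpha_k, k : 'I_n.+1. *)
Definition in_coprod (n : nat) (alpha : forall k : 'I_n.+1, {set {ffun 'I_n.+1 -> 'I_k.+1}}) :=
  forall k : 'I_n.+1, alpha k \subset Sur n k.

Definition honourable (n : nat) (alpha : forall k : 'I_n.+1, {set {ffun 'I_n.+1 -> 'I_k.+1}}) :=
  \bigcup_(k < n.+1) \bigcup_(mu in alpha k) tri mu = [set i : 'I_n.+1 | (i < n)%N].

(* Main.v *)
Require Import Defs.
From mathcomp Require Import all_boot.
Set Implicit Arguments. Unset Strict Implicit. Unset Printing Implicit Defensive.

Lemma card_lt_set m : #|[set j : 'I_m.+1 | (j < m)%N]| = m.
Proof.
have -> : [set j : 'I_m.+1 | (j < m)%N] = [set~ ord_max].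
  apply/setP=> j; rewrite !inE -val_eqE /= ltn_neqAle.
  by rewrite -ltnS ltn_ord andbT.
by rewrite cardsC1 card_ord.
Qed.

Lemma tri_card n k (mu : {ffun 'I_n.+1 -> 'I_k.+1}) : (#|tri mu| <= k)%N.
Proof.
have inj : {in tri mu &, injective mu}.
  move=> i i' /[!inE] /existsP[j /and3P[_ /eqP hi /forallP hmi]]
    /existsP[j' /and3P[_ /eqP hi' /forallP hmi']] e.
  apply/val_inj/eqP; rewrite eqn_leq.
  apply/andP; split.
    by apply: (implyP (hmi' i)); rewrite e hi'.
  by apply: (implyP (hmi i')); rewrite -e hi.
rewrite -(card_in_imset inj) -[X in (_ <= X)%N]card_lt_set.
apply: subset_leq_card; apply/subsetP=> y /imsetP[i].
move=> hi ->; move: hi; rewrite !inE => /existsP[j /and3P[hj /eqP -> _]] //.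
Qed.

Lemma card_bigcup_le (I T : finType) (r : seq I) (P : pred I) (F : I -> {set T}) :
  (#|\bigcup_(i <- r | P i) F i| <= \sum_(i <- r | P i) #|F i|)%N.
Proof.
elim/big_rec2: _ => [|i A s _ h]; first by rewrite cards0.
exact: leq_trans (leq_card_setU _ _).1 (leq_add (leqnn _) h).
Qed.

Lemma partA n (alpha : forall k : 'I_n.+1, {set {ffun 'I_n.+1 -> 'I_k.+1}}) :
  honourable alpha -> (n <= \sum_(k < n.+1) k * #|alpha k|)%N.
Proof.
rewrite /honourable => h.
have := card_bigcup_le (index_enum _) xpredT
  (fun k : 'I_n.+1 => \bigcup_(mu in alpha k) tri mu).
rewrite h card_lt_set => /leq_trans; apply; apply: leq_sum => k _.
apply: leq_trans (card_bigcup_le _ _ _) _.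
rewrite mulnC -sum_nat_const; apply: leq_sum => mu _; exact: tri_card.
Qed.

Section G.
Variable n : nat.
Variable S : {set 'I_n.+1}.
Definition g (x : nat) := #|[set s in S | (s < x)%N]|.

Lemma g_le x : (g x <= #|S|)%N.
Proof. by apply: subset_leq_card; apply/subsetP=> s; rewrite inE => /andP[]. Qed.

Lemma g_mono x y : (x <= y)%N -> (g x <= g y)%N.
Proof.
move=> hxy; apply: subset_leq_card; apply/subsetP=> s; rewrite !inE => /andP[-> h].
exact: leq_trans h hxy.
Qed.

Lemma g0 : g 0 = 0.
Proof. by apply/eqP; rewrite cards_eq0; apply/eqP/setP=> s; rewrite !inE andbF. Qed.

Lemma g_step x : (g x.+1 <= (g x).+1)%N.
Proof.
rewrite /g -(cardsID [set s in S | (s < x)%N] [set s in S | (s < x.+1)%N]).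
have -> : [set s in S | (s < x.+1)%N] :&: [set s in S | (s < x)%N] = [set s in S | (s < x)%N].
  apply/setP=> s; rewrite !inE; case: (s \in S) => //=; apply/andP/idP => [[]//|h].
  by split=> //; apply: ltnW.
rewrite -[X in (_ <= X)%N]addn1 leq_add2l; apply/card_le1_eqP=> s t.
rewrite !inE => /andP[hs' /andP[sS hs]] /andP[ht' /andP[tS ht]].
rewrite sS /= -leqNgt in hs'; rewrite tS /= -leqNgt in ht'.
apply/val_inj/eqP; rewrite eqn_leq; apply/andP; split.
  by rewrite ltnS in ht; apply: leq_trans ht hs'.
by rewrite ltnS in hs; apply: leq_trans hs ht'.
Qed.

Lemma g_strict (s : 'I_n.+1) x : s \in S -> (s < x)%N -> (g s < g x)%N.
Proof.
move=> sS sx; rewrite /g.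
apply: proper_card; apply/properP; split.
  apply/subsetP=> t; rewrite !inE => /andP[-> h]; exact: ltn_trans h sx.
by exists s; rewrite !inE ?sS ?sx ?ltnn.
Qed.

Lemma g_notin (i : 'I_n.+1) : i \notin S -> g i.+1 = g i.
Proof.
move=> iS; rewrite /g; apply: eq_card => s; rewrite !inE ltnS leq_eqVlt.
case sS: (s \in S) => //=; case e: (s == i :> nat) => //=.
by move: sS; rewrite (val_inj (eqP e)) (negbTE iS).
Qed.

Lemma g_ivt m y : (y <= g m)%N -> exists2 x, (x <= m)%N & g x = y.
Proof.
elim: m y => [|m IH] y hy.
  by exists 0 => //; move: hy; rewrite g0 leqn0 => /eqP ->.
case: (leqP y (g m)) => h.
  by case: (IH y h) => x hx e; exists x => //; apply: leqW.
exists m.+1 => //; apply/eqP; rewrite eqn_leq hy andbT.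
exact: leq_trans (g_step m) h.
Qed.

Hypothesis SW : S \subset [set i : 'I_n.+1 | (i < n)%N].

Lemma g_top x : (n <= x)%N -> g x = #|S|.
Proof.
move=> hx; apply: eq_card => s; rewrite !inE.
case sS: (s \in S) => //=; move/subsetP: SW => /(_ s sS); rewrite inE => h.
exact: leq_trans h hx.
Qed.

Definition surj m : {ffun 'I_n.+1 -> 'I_m.+1} := [ffun i : 'I_n.+1 => inord (g i)].

Hypothesis k : nat.
Hypothesis Sk : #|S| = k.

Lemma gk x : (g x < k.+1)%N.
Proof. by rewrite ltnS -Sk g_le. Qed.

Lemma surj_val i : (surj k i : nat) = g i.
Proof. by rewrite ffunE inordK // gk. Qed.

Lemma surj_Sur : surj k \in Sur n k.
Proof.
rewrite inE; apply/andP; split.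
  apply/forallP=> i; apply/forallP=> j; apply/implyP=> hij.
  by rewrite !surj_val g_mono.
apply/forallP=> y; apply/existsP.
have hy : (y <= g n)%N by rewrite g_top // Sk -ltnS ltn_ord.
case: (g_ivt hy) => x hx e; exists (inord x).
by rewrite -val_eqE /= surj_val inordK ?ltnS // e.
Qed.

Lemma tri_surj : tri (surj k) = S.
Proof.
apply/setP=> i; rewrite inE; apply/existsP/idP.
  case=> j /and3P[hj /eqP hij /forallP hmax]; apply/negPn/negP => iS.
  case: (ltnP i n) => hin.
    have := implyP (hmax (inord i.+1)).
    rewrite -hij -val_eqE /= !surj_val inordK // g_notin // eqxx => /(_ isT).
    by rewrite leqNgt ltnSn.
  by move: hj; rewrite -hij surj_val g_top // Sk ltnn.
move=> iS; exists (inord (g i)); apply/and3P; split.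
- rewrite inordK ?gk //; rewrite -Sk -(g_top (leqnn n)).
  by apply: g_strict => //; move/subsetP: SW => /(_ i iS); rewrite inE.
- by rewrite -val_eqE /= surj_val inordK ?gk.
- apply/forallP=> i'; apply/implyP; rewrite -val_eqE /= surj_val inordK ?gk //.
  move/eqP=> e; rewrite leqNgt; apply/negP=> hlt.
  by have := g_strict iS hlt; rewrite e ltnn.
Qed.
End G.

Section Comb.
Variable T : finType.
Definition draws (W : {set T}) k := [set S : {set T} | S \subset W & #|S| == k].

Lemma pick_new (D F : {set {set T}}) : F \subset D -> (#|F| < #|D|)%N ->
  exists2 S, S \in D & S \notin F.
Proof.
move=> FD lt; have : (0 < #|D :\: F|)%N by rewrite cardsDS // subn_gt0.
by case/card_gt0P=> S; rewrite inE => /andP[h1 h2]; exists S.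
Qed.

Lemma step (W U : {set T}) k a : U \subset W -> (a <= 'C(#|W|, k))%N ->
  exists F : {set {set T}}, [/\ F \subset draws W k, #|F| = a &
     (#|U :\: cover F| <= #|U| - k * a)%N].
Proof.
move=> UW; elim: a => [|a IH] ha.
  exists set0; split; rewrite ?sub0set ?cards0 //.
  by rewrite /cover big_set0 setD0 muln0 subn0.
case: (IH (ltnW ha)) => F [FD cF hR].
set R := U :\: cover F.
suff [S SD [SF hS]] : exists2 S, S \in draws W k & S \notin F /\
    (#|R :\: S| <= #|U| - k * a.+1)%N.
  exists (S |: F); split.
  - by rewrite subUset sub1set SD FD.
  - by rewrite cardsU1 SF cF.
  - by rewrite /cover big_setU1 //= setUC -setDDl.
have dC : #|draws W k| = 'C(#|W|, k) by rewrite cards_draws.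
have anyS : R = set0 \/ k = 0 -> exists2 S, S \in draws W k & S \notin F /\
    (#|R :\: S| <= #|U| - k * a.+1)%N.
  move=> hRk; have lt : (#|F| < #|draws W k|)%N by rewrite cF dC.
  have [S SD SF] := pick_new FD lt.
  exists S => //; split => //; case: hRk => [->|->].
    by rewrite set0D cards0.
  by rewrite mul0n subn0; apply: leq_trans (subset_leq_card (subsetDl _ _)) _; exact: leq_trans hR (leq_subr _ _).
have RW : R \subset W by apply: subset_trans (subsetDl _ _) UW.
have RF : forall S, S \in F -> [disjoint R & S].
  move=> S SF; rewrite disjoint_subset; apply/subsetP=> x xR; rewrite inE.
  apply/negP=> xS; move: xR; rewrite inE => /andP[/negP []].
  by apply/bigcupP; exists S.
case: (posnP k) => [k0|kpos]; first by apply: anyS; right.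
case: (leqP k #|R|) => hk.
  have : (0 < #|draws R k|)%N by rewrite cards_draws bin_gt0.
  case/card_gt0P=> S; rewrite inE => /andP[SR /eqP Sk].
  exists S.
    by rewrite inE (subset_trans SR RW) Sk eqxx.
  split.
    apply/negP=> SF; have := RF S SF; rewrite -setI_eq0 (setIidPr SR) => /eqP S0.
    by move: kpos; rewrite -Sk S0 cards0.
  rewrite cardsDS // Sk mulnS addnC subnDA; exact: leq_sub2r.
case: (eqVneq R set0) => [R0|Rn0]; first by apply: anyS; left.
have kW : (k <= #|W|)%N by rewrite -bin_gt0; apply: leq_trans ha.
have : (0 < #|draws (W :\: R) (k - #|R|)|)%N.
  by rewrite cards_draws bin_gt0 cardsDS // leq_sub2r.
case/card_gt0P=> S'; rewrite inE => /andP[S'WR /eqP S'k].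
exists (R :|: S').
  rewrite inE subUset RW (subset_trans S'WR (subsetDl _ _)) /=.
  rewrite cardsU S'k.
  have -> : R :&: S' = set0.
    apply/setP=> x; rewrite in_setI in_set0; apply/negP=> /andP[xR xS'].
    by move/subsetP: S'WR => /(_ x xS'); rewrite in_setD xR.
  by rewrite cards0 subn0 subnKC ?(ltnW hk).
split; last first.
  have -> : R :\: (R :|: S') = set0 by apply/eqP; rewrite setD_eq0 subsetUl.
  by rewrite cards0.
apply/negP=> SF; have := RF _ SF; rewrite -setI_eq0 => /eqP.
case/set0Pn: Rn0 => x xR /setP /(_ x); by rewrite in_setI in_set0 xR in_setU xR.
Qed.

Lemma iter (W : {set T}) (a : nat -> nat) m :
  (forall k, (k < m)%N -> (a k <= 'C(#|W|, k))%N) ->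
  exists G : nat -> {set {set T}},
    (forall k, (k < m)%N -> G k \subset draws W k /\ #|G k| = a k) /\
    (#|W :\: \bigcup_(k < m) cover (G k)| <= #|W| - \sum_(k < m) k * a k)%N.
Proof.
elim: m => [|m IH] ha.
  exists (fun _ => set0); split=> // ; by rewrite !big_ord0 setD0 subn0.
case: IH => [k hk|G [hG hW]]; first by apply: ha; apply: leqW.
set U := W :\: \bigcup_(k < m) cover (G k).
have [F [FD cF hF]] := step (subsetDl W (\bigcup_(k < m) cover (G k))) (ha m (ltnSn m)).
exists (fun k => if k == m then F else G k); split.
  move=> k; rewrite ltnS leq_eqVlt => /orP[/eqP->|hk]; first by rewrite eqxx.
  by rewrite (ltn_eqF hk); apply: hG.
rewrite !big_ord_recr /= eqxx.
rewrite (eq_bigr (fun k : 'I_m => cover (G k))); last first.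
  by move=> k _; rewrite (ltn_eqF (ltn_ord k)).
rewrite -setDDl subnDA; apply: leq_trans hF _; exact: leq_sub2r.
Qed.
End Comb.

Unset Implicit Arguments.
Theorem mainTheorem11 (n : nat) (hn : (1 <= n)%N) :
  (forall alpha : forall k : 'I_n.+1, {set {ffun 'I_n.+1 -> 'I_k.+1}},
     in_coprod alpha -> honourable alpha ->
     (n <= \sum_(k < n.+1) k * #|alpha k|)%N)
  /\
  (forall a : 'I_n.+1 -> nat,
     (forall k : 'I_n.+1, (a k <= 'C(n, k))%N) ->
     (n <= \sum_(k < n.+1) k * a k)%N ->
     exists alpha : forall k : 'I_n.+1, {set {ffun 'I_n.+1 -> 'I_k.+1}},
       [/\ in_coprod alpha, honourable alpha & forall k : 'I_n.+1, #|alpha k| = a k]).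
Proof.
split; first by move=> alpha _; apply: partA.
move=> a ha hsum.
pose W := [set i : 'I_n.+1 | (i < n)%N].
have cW : #|W| = n by rewrite card_lt_set.
pose a' k := if (k < n.+1)%N then a (inord k) else 0.
have ha' : forall k, (k < n.+1)%N -> (a' k <= 'C(#|W|, k))%N.
  by move=> k hk; rewrite /a' hk cW; have := ha (inord k); rewrite inordK.
have [G [hG hW]] := iter ha'.
have sum_eq : \sum_(k < n.+1) k * a' k = \sum_(k < n.+1) k * a k.
  by apply: eq_bigr => k _; rewrite /a' ltn_ord inord_val.
have cov : W \subset \bigcup_(k < n.+1) cover (G k).
  rewrite -setD_eq0 -cards_eq0 -leqn0; apply: leq_trans hW _.
  by rewrite sum_eq cW leqn0 subn_eq0.
have memG : forall (k : 'I_n.+1) S, S \in G k -> S \subset W /\ #|S| = k.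
  move=> k S SG; have [/subsetP h _] := hG k (ltn_ord k).
  by move: (h S SG); rewrite inE => /andP[-> /eqP ->].
have inj : forall k : 'I_n.+1, {in G k &, injective (fun S => surj S k)}.
  move=> k S1 S2 h1 h2 e; have [W1 k1] := memG k S1 h1; have [W2 k2] := memG k S2 h2.
  by rewrite -(tri_surj W1 k1) /= e (tri_surj W2 k2).
exists (fun k : 'I_n.+1 => (fun S => surj S k) @: G k); split.
- move=> k; apply/subsetP=> mu /imsetP[S SG ->].
  have [SW Sk] := memG k S SG; exact: (surj_Sur SW Sk).
- rewrite /honourable.
  rewrite (eq_bigr (fun k : 'I_n.+1 => cover (G k))); last first.
    move=> k _; rewrite big_imset; last exact: inj.
    apply: eq_bigr => S SG; have [SW Sk] := memG k S SG.
    exact: (tri_surj SW Sk).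
  apply/eqP; rewrite eqEsubset cov andbT; apply/bigcupsP=> k _.
  by apply/bigcupsP=> S SG; have [SW _] := memG k S SG.
- move=> k; rewrite card_in_imset; last exact: inj.
  by have [_ ->] := hG k (ltn_ord k); rewrite /a' ltn_ord inord_val.
Qed.
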